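(* Let $d=2$ or $d$ an odd prime, let $t\ge1$, let $V$ be a unitary on $(\mathbb{C}^d)^{\otimes t}$ in the third level of the Clifford hierarchy, and let $|\phi\rangle$ be a pure stabilizer state on $(\mathbb{C}^d)^{\otimes t}$. Then $|\psi\rangle=V|\phi\rangle$ satisfies $D_{\min,\mathbb{F}_{\rm STAB}}(\psi^{\otimes n})=D_{\max,\mathbb{F}_{\rm STAB}}(\psi^{\otimes n})$ for every integer $n\ge1$.
   Context: $\log$ base 2. On $\mathbb{C}^d$, $X|j\rangle=|j+1\bmod d\rangle$, $Z|j\rangle=e^{2\pi ij/d}|j\rangle$; the multi-qudit (generalized) Pauli group is generated by tensor products of powers of $X$ and $Z$ (with phases). The Clifford group consists of unitaries that map the Pauli group to itself under conjugation (up to phases). The third level of the Clifford hierarchy consists of unitaries $V$ with $VPV^\dagger$ Clifford for every Pauli operator $P$. Pure stabilizer states are states $C|0\rangle^{\otimes m}$ with $C$ Clifford, and $\mathbb{F}_{\rm STAB}$ is the convex hull of pure stabilizer states on the relevant number of qudits (here $tn$). $D_{\min,\mathbb{F}}(\rho)=\inf_{\sigma\in\mathbb{F}}(-\log\mathrm{Tr}[\Pi_\rho\sigma])$; $D_{\max,\mathbb{F}}(\rho)=\inf\{\log(1+s):\frac{\rho+s\tau}{1+s}\in\mathbb{F},\tau\text{ a state}\}$. *)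

(* Defs.v *)
From mathcomp Require Import all_boot all_order all_algebra all_reals all_analysis.
From mathcomp Require Import complex.
Set Implicit Arguments. Unset Strict Implicit. Unset Printing Implicit Defensive.
Import Order.TTheory GRing.Theory Num.Theory.
Local Open Scope ring_scope.
Local Open Scope classical_set_scope.

Definition adjm (R : realType) (m n : nat) (A : 'M[R[i]]_(m, n)) : 'M[R[i]]_(n, m) :=
  (map_mx Num.conj A)^T.

Definition omega (R : realType) (d : nat) : R[i] :=
  Complex (cos (2 * pi / d%:R)) (sin (2 * pi / d%:R)).

(* k-th base-d digit of an index: (C^d)^{⊗m} has basis indexed by
   i < d^m, i = sum_k i_k d^k; qudit k carries the digit i_k. *)
Definition digit (d i k : nat) : nat := ((i %/ d ^ k) %% d)%N.

(* The m-qudit Pauli string  X^{a_0} Z^{b_0} ⊗ ... ⊗ X^{a_{m-1}} Z^{b_{m-1}},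
   written out entrywise: (X^a Z^b)_{x,y} = [x = y + a mod d] omega^{b y}. *)
Definition pauli_string (R : realType) (d m : nat) (a b : 'I_m -> nat)
  : 'M[R[i]]_(d ^ m) :=
  \matrix_(x, y) \prod_(k < m)
     ((digit d x k == (digit d y k + a k) %% d)%N%:R * omega R d ^+ (b k * digit d y k)%N).

Definition is_pauli (R : realType) (d m : nat) (P : 'M[R[i]]_(d ^ m)) : Prop :=
  exists (lam : R[i]) (a b : 'I_m -> nat),
    `|lam| = 1 /\ P = lam *: pauli_string R d a b.
Arguments is_pauli : clear implicits.

Definition unitary (R : realType) (N : nat) (U : 'M[R[i]]_N) : Prop :=
  U *m adjm U = 1%:M.

Definition is_clifford (R : realType) (d m : nat) (U : 'M[R[i]]_(d ^ m)) : Prop :=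
  unitary U /\ forall P, is_pauli R d m P -> is_pauli R d m (U *m P *m adjm U).
Arguments is_clifford : clear implicits.

Definition third_level (R : realType) (d m : nat) (V : 'M[R[i]]_(d ^ m)) : Prop :=
  unitary V /\ forall P, is_pauli R d m P -> is_clifford R d m (V *m P *m adjm V).
Arguments third_level : clear implicits.

Definition ket0 (R : realType) (d m : nat) : 'cV[R[i]]_(d ^ m) :=
  \col_x ((x : nat) == 0%N)%:R.

Definition is_stab_state (R : realType) (d m : nat) (phi : 'cV[R[i]]_(d ^ m)) : Prop :=
  exists C, is_clifford R d m C /\ phi = C *m ket0 R d m.
Arguments is_stab_state : clear implicits.

Definition proj (R : realType) (N : nat) (v : 'cV[R[i]]_N) : 'M[R[i]]_N :=
  v *m adjm v.

Definition realC (R : realType) (x : R) : R[i] := Complex x 0.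

Definition in_FSTAB (R : realType) (d m : nat) (sigma : 'M[R[i]]_(d ^ m)) : Prop :=
  exists (k : nat) (w : 'I_k -> R) (phi : 'I_k -> 'cV[R[i]]_(d ^ m)),
    (forall l, 0 <= w l) /\ \sum_l w l = 1 /\
    (forall l, is_stab_state R d m (phi l)) /\
    sigma = \sum_l realC (w l) *: proj (phi l).
Arguments in_FSTAB : clear implicits.

Definition psd (R : realType) (N : nat) (A : 'M[R[i]]_N) : Prop :=
  A = adjm A /\ forall x : 'cV[R[i]]_N, 0 <= (adjm x *m A *m x) 0 0.

Definition is_state (R : realType) (N : nat) (tau : 'M[R[i]]_N) : Prop :=
  psd tau /\ \tr tau = 1.

(* P is the orthogonal projector onto the support (range) of rho:
   an orthogonal projector fixing the range of rho and of the same rank. *)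
Definition supp_proj (R : realType) (N : nat) (rho P : 'M[R[i]]_N) : Prop :=
  P = adjm P /\ P *m P = P /\ P *m rho = rho /\ \rank P = \rank rho.

(* -log_2 of a (real, nonnegative) trace value, with -log 0 = +oo *)
Definition neglog2 (R : realType) (z : R[i]) : \bar R :=
  if 0 < complex.Re z then (- (ln (complex.Re z) / ln 2))%:E else +oo%E.

Definition Dmin_STAB (R : realType) (d m : nat) (rho : 'M[R[i]]_(d ^ m)) : \bar R :=
  ereal_inf (fun y : \bar R => exists P sigma, supp_proj rho P /\ in_FSTAB R d m sigma /\
                                     y = neglog2 (\tr (P *m sigma))).
Arguments Dmin_STAB : clear implicits.

Definition Dmax_STAB (R : realType) (d m : nat) (rho : 'M[R[i]]_(d ^ m)) : \bar R :=
  ereal_inf (fun y : \bar R => exists (s : R) (tau : 'M[R[i]]_(d ^ m)),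
     0 <= s /\ is_state tau /\
     in_FSTAB R d m ((realC (1 + s))^-1 *: (rho + realC s *: tau)) /\
     y = (ln (1 + s) / ln 2)%:E).
Arguments Dmax_STAB : clear implicits.

(* entry k of a column vector (0 out of range) *)
Definition vget (R : realType) (N : nat) (v : 'cV[R[i]]_N) (k : nat) : R[i] :=
  if @insub _ (fun x => x < N)%N 'I_N k is Some o then v o 0 else 0.

(* psi^{⊗n} for psi on t qudits, a vector on t*n qudits: block l (qudits
   l*t, ..., l*t+t-1) is the l-th base-d^t digit of the index. *)
Definition tpow_vec (R : realType) (d t n : nat) (psi : 'cV[R[i]]_(d ^ t))
  : 'cV[R[i]]_(d ^ (t * n)) :=
  \col_x \prod_(l < n) vget psi ((x %/ (d ^ t) ^ l) %% d ^ t)%N.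
Arguments tpow_vec : clear implicits.

(* Main.v *)
Require Import Defs.
From mathcomp Require Import all_boot all_order all_algebra all_reals all_analysis.
From mathcomp Require Import complex.
From mathcomp Require Import ring lra.
Import GRing.Theory Num.Theory.
Local Open Scope ring_scope.

Module PartA.
Import GRing.Theory Num.Theory.
Local Open Scope ring_scope.
Local Open Scope complex_scope.
Set Implicit Arguments. Unset Strict Implicit. Unset Printing Implicit Defensive.

Section PartA.
Variable R : realType.
Local Notation C := (R[i]).

Lemma adjmM m n p (A : 'M[C]_(m, n)) (B : 'M[C]_(n, p)) :
  adjm (A *m B) = adjm B *m adjm A.
Proof. by rewrite /adjm map_mxM trmx_mul. Qed.

Lemma adjmK m n (A : 'M[C]_(m, n)) : adjm (adjm A) = A.
Proof. by apply/matrixP => i j; rewrite !mxE conjCK. Qed.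

Lemma adjmD m n (A B : 'M[C]_(m, n)) : adjm (A + B) = adjm A + adjm B.
Proof. by apply/matrixP => i j; rewrite !mxE rmorphD. Qed.

Lemma adjmZ m n (a : C) (A : 'M[C]_(m, n)) : adjm (a *: A) = a^* *: adjm A.
Proof. by apply/matrixP => i j; rewrite !mxE rmorphM. Qed.

Lemma adjm0 m n : adjm (0 : 'M[C]_(m, n)) = 0.
Proof. by apply/matrixP => i j; rewrite !mxE rmorph0. Qed.

Lemma adjm_sum m n I (r : seq I) (P : pred I) (F : I -> 'M[C]_(m, n)) :
  adjm (\sum_(i <- r | P i) F i) = \sum_(i <- r | P i) adjm (F i).
Proof.
apply/matrixP => i j; rewrite !mxE !summxE rmorph_sum.
by apply: eq_bigr => k _; rewrite !mxE.
Qed.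

Lemma adjm1 n : adjm (1%:M : 'M[C]_n) = 1%:M.
Proof. by apply/matrixP => i j; rewrite !mxE eq_sym; case: (_ == _); rewrite ?rmorph0 ?rmorph1. Qed.

Lemma unitaryV N (U : 'M[C]_N) : unitary U -> adjm U *m U = 1%:M.
Proof. by rewrite /unitary => /mulmx1C. Qed.

Lemma unitaryM N (U W : 'M[C]_N) : unitary U -> unitary W -> unitary (U *m W).
Proof.
rewrite /unitary => hU hW; rewrite adjmM mulmxA -(mulmxA U) hW mulmx1 hU //.
Qed.

Lemma cliffordM d m (C1 C2 : 'M[C]_(d ^ m)) :
  is_clifford R d m C1 -> is_clifford R d m C2 -> is_clifford R d m (C1 *m C2).
Proof.
move=> [u1 h1] [u2 h2]; split; first exact: unitaryM.
move=> P hP; rewrite adjmM.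
have -> : C1 *m C2 *m P *m (adjm C2 *m adjm C1) = C1 *m (C2 *m P *m adjm C2) *m adjm C1.
  by rewrite !mulmxA.
by apply: h1; apply: h2.
Qed.

Lemma stab_clifford d m (W : 'M[C]_(d ^ m)) phi :
  is_clifford R d m W -> is_stab_state R d m phi -> is_stab_state R d m (W *m phi).
Proof.
move=> hW [C0 [hC ->]]; exists (W *m C0); split; first exact: cliffordM.
by rewrite mulmxA.
Qed.

Unset Implicit Arguments.
Definition cone d m (sigma : 'M[C]_(d ^ m)) : Prop :=
  exists (k : nat) (w : 'I_k -> R) (phi : 'I_k -> 'cV[C]_(d ^ m)),
    (forall l, 0 <= w l) /\
    (forall l, is_stab_state R d m (phi l)) /\
    sigma = \sum_l realC (w l) *: proj (phi l).


Set Implicit Arguments.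

Lemma realCE (x : R) : realC x = x%:C.
Proof. by []. Qed.

Lemma realC_sum I (r : seq I) (P : pred I) (F : I -> R) :
  \sum_(i <- r | P i) realC (F i) = realC (\sum_(i <- r | P i) F i).
Proof.
rewrite realCE -(rmorph_sum (real_complex R)); reflexivity.
Qed.

Lemma cone0 d m : cone d m 0.
Proof.
exists 0%N, (fun _ => 0), (fun _ => 0); split => //; split; first by case.
by rewrite big_ord0.
Qed.

Lemma coneD d m s1 s2 : cone d m s1 -> cone d m s2 -> cone d m (s1 + s2).
Proof.
move=> [k1 [w1 [p1 [hw1 [hp1 ->]]]]] [k2 [w2 [p2 [hw2 [hp2 ->]]]]].
exists (k1 + k2)%N, (fun l => match split l with inl a => w1 a | inr b => w2 b end),
  (fun l => match split l with inl a => p1 a | inr b => p2 b end).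
split; first by move=> l; case: split.
split; first by move=> l; case: split.
rewrite big_split_ord /=; congr (_ + _); apply: eq_bigr => i _.
  by rewrite -[lshift _ _]/(unsplit (inl i)) unsplitK.
by rewrite -[rshift _ _]/(unsplit (inr i)) unsplitK.
Qed.

Lemma coneZ d m (c : R) s : 0 <= c -> cone d m s -> cone d m (realC c *: s).
Proof.
move=> hc [k [w [p [hw [hp ->]]]]].
exists k, (fun l => c * w l), p; split; first by move=> l; rewrite mulr_ge0.
split => //; rewrite scaler_sumr; apply: eq_bigr => i _.
by rewrite scalerA !realCE rmorphM.
Qed.

Lemma cone_sum d m I (r : seq I) (F : I -> 'M[C]_(d ^ m)) :
  (forall i, cone d m (F i)) -> cone d m (\sum_(i <- r) F i).
Proof.
move=> h; elim/big_rec: _ => [|i x _ hx]; first exact: cone0.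
exact: coneD.
Qed.

Lemma proj_conj N (W : 'M[C]_N) v : W *m proj v *m adjm W = proj (W *m v).
Proof. by rewrite /proj adjmM !mulmxA. Qed.

Lemma cone_conj d m (W : 'M[C]_(d ^ m)) s :
  is_clifford R d m W -> cone d m s -> cone d m (W *m s *m adjm W).
Proof.
move=> hW [k [w [p [hw [hp ->]]]]].
exists k, w, (fun l => W *m p l); split => //; split.
  by move=> l; apply: stab_clifford.
rewrite mulmx_sumr mulmx_suml; apply: eq_bigr => i _.
by rewrite -scalemxAr -scalemxAl proj_conj.
Qed.

Lemma FSTAB_cone d m s : in_FSTAB R d m s -> cone d m s.
Proof. by move=> [k [w [p [hw [_ [hp ->]]]]]]; exists k, w, p. Qed.

Lemma unit_vec N (U : 'M[C]_N) (v : 'cV[C]_N) : unitary U -> adjm v *m v = 1%:M ->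
  adjm (U *m v) *m (U *m v) = 1%:M.
Proof.
move=> hU hv; rewrite adjmM mulmxA -(mulmxA (adjm v)) unitaryV // mulmx1 //.
Qed.

Lemma ket0_norm d m : (0 < d)%N -> adjm (ket0 R d m) *m ket0 R d m = 1%:M.
Proof.
move=> d0; apply/matrixP => i j; rewrite !ord1 !mxE.
have hz : (0 < d ^ m)%N by rewrite expn_gt0 d0.
rewrite (bigD1 (Ordinal hz)) //= big1 ?addr0.
  by rewrite !mxE eqxx /= rmorph1 mulr1.
move=> x hx; rewrite !mxE; have -> : (nat_of_ord x == 0%N) = false.
  by apply/negbTE; apply: contra hx => /eqP h; apply/eqP/val_inj.
by rewrite rmorph0 mul0r.
Qed.

Lemma stab_norm d m phi : (0 < d)%N -> is_stab_state R d m phi -> adjm phi *m phi = 1%:M.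
Proof.
move=> d0 [C0 [[hu _] ->]]; apply: unit_vec => //; exact: ket0_norm.
Qed.

Lemma tr_proj N (v : 'cV[C]_N) : \tr (proj v) = (adjm v *m v) 0 0.
Proof. by rewrite /proj mxtrace_mulC trace_mx11. Qed.

Lemma tr_proj1 N (v : 'cV[C]_N) : adjm v *m v = 1%:M -> \tr (proj v) = 1.
Proof. by move=> h; rewrite tr_proj h mxE. Qed.

Lemma cone_FSTAB d m s : (0 < d)%N -> cone d m s -> \tr s = 1 -> in_FSTAB R d m s.
Proof.
move=> d0 [k [w [p [hw [hp ->]]]]] htr; exists k, w, p; split => //; split => //.
move: htr; rewrite raddf_sum /=.
rewrite (eq_bigr (fun i => realC (w i))); last first.
  move=> i _; rewrite mxtraceZ tr_proj1 ?mulr1 //; exact: stab_norm.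
rewrite realC_sum.
by move/(congr1 (@complex.Re R)).
Qed.

End PartA.

End PartA.
Import PartA.

Module PartB.
Import GRing.Theory Num.Theory.
Local Open Scope ring_scope.
Local Open Scope complex_scope.
Set Implicit Arguments. Unset Strict Implicit. Unset Printing Implicit Defensive.

Lemma mod_mul_split a b y : (0 < a)%N ->
  (y %% (b * a) = y %% a + a * ((y %/ a) %% b))%N.
Proof.
move=> a0; rewrite modn_divl.
set z := (y %% (b * a))%N.
have -> : (y %% a = z %% a)%N by rewrite /z modn_dvdm // dvdn_mull.
by rewrite {1}(divn_eq z a) addnC mulnC.
Qed.

Lemma digits_inj B m y1 y2 : (0 < B)%N ->
  (forall l, (l < m)%N -> (y1 %/ B ^ l) %% B = (y2 %/ B ^ l) %% B)%N ->
  (y1 %% B ^ m = y2 %% B ^ m)%N.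
Proof.
move=> B0; elim: m => [|m IH] h; first by rewrite expn0 !modn1.
have hB : (0 < B ^ m)%N by rewrite expn_gt0 B0.
rewrite expnS !mod_mul_split // IH ?h // => l hl; apply: h; exact: ltnW.
Qed.

Section Kron.
Variable R : realType.
Local Notation C := (R[i]).
Variables d t : nat.
Hypothesis d0 : (0 < d)%N.
Local Notation N := (d ^ t)%N.

Lemma N_gt0 : (0 < N)%N. Proof. by rewrite expn_gt0 d0. Qed.

Definition blk (x l : nat) : nat := ((x %/ N ^ l) %% N)%N.

Lemma blk_lt x l : (blk x l < N)%N.
Proof. by rewrite /blk ltn_pmod // N_gt0. Qed.

Lemma blk0 l : blk 0 l = 0%N.
Proof. by rewrite /blk div0n mod0n. Qed.

Lemma digit_blk x l j : (j < t)%N -> digit d x (l * t + j) = digit d (blk x l) j.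
Proof.
move=> jt; rewrite /digit /blk.
have -> : (d ^ (l * t + j) = N ^ l * d ^ j)%N by rewrite expnD (mulnC l t) expnM.
rewrite divnMA.
set X := (x %/ N ^ l)%N.
rewrite (modn_divl X) (modn_divl (X %% N)%N) modn_dvdm // -expnS dvdn_exp2l //.
Qed.

Lemma blk_inj n (x y : 'I_(d ^ (t * n))) :
  (forall l, (l < n)%N -> blk x l = blk y l) -> x = y.
Proof.
move=> h; apply/val_inj => /=.
have := @digits_inj N n x y N_gt0 h.
rewrite -expnM !modn_small //.
Qed.

Definition mget (A : 'M[C]_N) (i j : nat) : C :=
  if @insub _ (fun x => x < N)%N 'I_N i is Some a then
    (if @insub _ (fun x => x < N)%N 'I_N j is Some b then A a b else 0) else 0.

Lemma mgetE (A : 'M[C]_N) (i j : 'I_N) : mget A i j = A i j.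
Proof. by rewrite /mget !valK. Qed.

Lemma mgetE2 (A : 'M[C]_N) i j (hi : (i < N)%N) (hj : (j < N)%N) :
  mget A i j = A (Ordinal hi) (Ordinal hj).
Proof. by rewrite -mgetE. Qed.

Definition Kron n (A : nat -> 'M[C]_N) : 'M[C]_(d ^ (t * n)) :=
  \matrix_(x, y) \prod_(l < n) mget (A l) (blk x l) (blk y l).

Definition bo (x l : nat) : 'I_N := Ordinal (blk_lt x l).

Lemma mget_bo (A : 'M[C]_N) x y l : mget A (blk x l) (blk y l) = A (bo x l) (bo y l).
Proof. exact: mgetE2. Qed.

Definition dec n (y : 'I_(d ^ (t * n))) : {ffun 'I_n -> 'I_N} :=
  [ffun l : 'I_n => bo y l].

Lemma dec_bij n : bijective (@dec n).
Proof.
apply: inj_card_bij.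
  move=> y1 y2 /ffunP h; apply: blk_inj => l hl.
  by have := h (Ordinal hl); rewrite !ffunE => -[].
by rewrite card_ffun !card_ord expnM.
Qed.

Lemma Kron_mul n (A B : nat -> 'M[C]_N) :
  Kron n A *m Kron n B = Kron n (fun l => A l *m B l).
Proof.
apply/matrixP => x z; rewrite !mxE.
under [RHS]eq_bigr => l _ do rewrite mget_bo mxE.
rewrite bigA_distr_bigA /= (reindex (@dec n)) /=; last first.
  by apply: onW_bij; exact: dec_bij.
apply: eq_bigr => y _; rewrite !mxE -big_split /=.
by apply: eq_bigr => l _; rewrite !mget_bo ffunE.
Qed.


Lemma eq_Kron n (A B : nat -> 'M[C]_N) :
  (forall l, (l < n)%N -> A l = B l) -> Kron n A = Kron n B.
Proof.
move=> h; apply/matrixP => x y; rewrite !mxE.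
by apply: eq_bigr => l _; rewrite h.
Qed.

Lemma Kron_adj n (A : nat -> 'M[C]_N) :
  adjm (Kron n A) = Kron n (fun l => adjm (A l)).
Proof.
apply/matrixP => x y; rewrite !mxE rmorph_prod.
by apply: eq_bigr => l _; rewrite !mget_bo !mxE.
Qed.

Lemma Kron_1 n : Kron n (fun _ => 1%:M) = 1%:M.
Proof.
apply/matrixP => x y; rewrite !mxE.
under eq_bigr => l _ do rewrite mget_bo mxE.
case: (eqVneq x y) => [->|hxy].
  by rewrite big1 // => l _; rewrite eqxx.
have [l hl] : exists l : 'I_n, bo x l != bo y l.
  apply/existsP; apply: contraT; rewrite negb_exists => /forallP hn.
  case/eqP: hxy; apply: blk_inj => l hl.
  by have := hn (Ordinal hl) => /negPn /eqP [].
by rewrite (bigD1 l) //= (negbTE hl) mul0r.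
Qed.

Lemma Kron_scale n (c : nat -> C) (A : nat -> 'M[C]_N) :
  Kron n (fun l => c l *: A l) = (\prod_(l < n) c l) *: Kron n A.
Proof.
apply/matrixP => x y; rewrite !mxE -big_split /=.
by apply: eq_bigr => l _; rewrite !mget_bo mxE.
Qed.

Lemma Kron_unitary n (A : nat -> 'M[C]_N) :
  (forall l, unitary (A l)) -> unitary (Kron n A).
Proof.
move=> h; rewrite /unitary Kron_adj Kron_mul -(Kron_1 n).
by apply: eq_Kron => l _; apply: h.
Qed.

Lemma Kron_ket0 n (A : nat -> 'M[C]_N) (x : 'I_(d ^ (t * n))) :
  (Kron n A *m ket0 R d (t * n)) x 0 = \prod_(l < n) mget (A l) (blk x l) 0.
Proof.
rewrite !mxE.
have hz : (0 < d ^ (t * n))%N by rewrite expn_gt0 d0.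
rewrite (bigD1 (Ordinal hz)) //= big1 ?addr0.
  rewrite !mxE eqxx mulr1; apply: eq_bigr => l _; by rewrite blk0.
move=> y hy; rewrite !mxE; have -> : (nat_of_ord y == 0%N) = false.
  by apply/negbTE; apply: contra hy => /eqP h; apply/eqP/val_inj.
by rewrite mulr0.
Qed.

End Kron.

End PartB.
Import PartB.

Module PartC.
Import GRing.Theory Num.Theory.
Local Open Scope ring_scope.
Local Open Scope complex_scope.
Set Implicit Arguments. Unset Strict Implicit. Unset Printing Implicit Defensive.

Definition ext m (a : 'I_m -> nat) (k : nat) : nat :=
  if @insub _ (fun x => x < m)%N 'I_m k is Some o then a o else 0%N.

Lemma extE m (a : 'I_m -> nat) (k : 'I_m) : ext a k = a k.
Proof. by rewrite /ext valK. Qed.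

Lemma extE2 m (a : 'I_m -> nat) k (hk : (k < m)%N) : ext a k = a (Ordinal hk).
Proof. by rewrite -extE. Qed.

Section Pauli.
Variable R : realType.
Local Notation C := (R[i]).

Lemma prod_split_nat t n (G : nat -> C) :
  \prod_(0 <= k < t * n) G k = \prod_(0 <= l < n) \prod_(0 <= j < t) G (l * t + j)%N.
Proof.
elim: n => [|n IH]; first by rewrite muln0 !big_geq.
rewrite big_nat_recr //= -IH mulnSr (@big_cat_nat _ _ _ (t * n) 0 (t * n + t)) ?leq_addr //=.
congr (_ * _).
rewrite -[X in \big[_/_]_(X <= _ < _) _]add0n big_addn addKn.
by apply: eq_bigr => j _; rewrite addnC mulnC.
Qed.

Lemma prod_split t n (G : nat -> C) :
  \prod_(k < t * n) G k = \prod_(l < n) \prod_(j < t) G (l * t + j)%N.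
Proof.
rewrite -(big_mkord (fun _ => true) G) prod_split_nat big_mkord.
by apply: eq_bigr => l _; rewrite big_mkord.
Qed.

Lemma pauli_ext d m (a a' b b' : 'I_m -> nat) :
  a =1 a' -> b =1 b' -> pauli_string R d a b = pauli_string R d a' b'.
Proof.
move=> ha hb; apply/matrixP => x y; rewrite !mxE.
by apply: eq_bigr => k _; rewrite ha hb.
Qed.

Variables d t : nat.
Hypothesis d0 : (0 < d)%N.

Lemma pauli_tn n (a b : 'I_(t * n) -> nat) :
  pauli_string R d a b =
  @Kron R d t n (fun l => pauli_string R d (fun j : 'I_t => ext a (l * t + j))
                                       (fun j : 'I_t => ext b (l * t + j))).
Proof.
apply/matrixP => x y; rewrite !mxE.
pose G k := ((digit d x k == (digit d y k + ext a k) %% d)%N%:R *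
             omega R d ^+ (ext b k * digit d y k)%N) : C.
rewrite (eq_bigr (fun k : 'I_(t * n) => G k)); last by move=> k _; rewrite /G !extE.
rewrite prod_split; apply: eq_bigr => l _.
rewrite mget_bo mxE; apply: eq_bigr => j _.
by rewrite /G !digit_blk.
Qed.

Lemma Kron_clifford n (A : nat -> 'M[C]_(d ^ t)) : (0 < t)%N ->
  (forall l, is_clifford R d t (A l)) -> is_clifford R d (t * n) (@Kron R d t n A).
Proof.
move=> t0 hA; split; first by apply: (Kron_unitary d0) => l; case: (hA l).
move=> P [lam [a [b [hl ->]]]].
rewrite pauli_tn -scalemxAr -scalemxAl (Kron_adj d0) !(Kron_mul d0).
set Pl := fun l => pauli_string R d (fun j : 'I_t => ext a (l * t + j))
                                   (fun j : 'I_t => ext b (l * t + j)).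
have hex : forall l, exists p : C * (('I_t -> nat) * ('I_t -> nat)),
    `|p.1| = 1 /\ A l *m Pl l *m adjm (A l) = p.1 *: pauli_string R d p.2.1 p.2.2.
  move=> l; case: (hA l) => _ h.
  have hP : is_pauli R d t (Pl l).
    by exists 1, (fun j : 'I_t => ext a (l * t + j)), (fun j : 'I_t => ext b (l * t + j)); rewrite normr1 scale1r.
  case: (h _ hP) => mu [a' [b' [hmu ->]]].
  by exists (mu, (a', b')).
case: (boolp.choice hex) => f hf.
rewrite (eq_Kron (B := fun l => (f l).1 *: pauli_string R d (f l).2.1 (f l).2.2)); last first.
  by move=> l _; case: (hf l).
rewrite (Kron_scale d0) scalerA.
pose a'' := fun k : 'I_(t * n) => ext (f (k %/ t)%N).2.1 (k %% t).
pose b'' := fun k : 'I_(t * n) => ext (f (k %/ t)%N).2.2 (k %% t).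
exists (lam * \prod_(l < n) (f l).1), a'', b''; split.
  rewrite normrM hl mul1r; apply: (big_ind (fun x : C => `|x| = 1)) => //.
  - by rewrite normr1.
  - by move=> x y hx hy; rewrite normrM hx hy mulr1.
  - by move=> l _; case: (hf l).
congr (_ *: _); rewrite pauli_tn; apply: eq_Kron => l hl'.
have key : forall j : 'I_t, ((l * t + j) %/ t = l)%N /\ ((l * t + j) %% t = j)%N.
  move=> j; rewrite divnMDl // divn_small // addn0; split => //.
  by rewrite modnMDl modn_small.
have hlt : forall j : 'I_t, (l * t + j < t * n)%N.
  move=> j; rewrite mulnC; apply: (@leq_trans (t * l + t)); first by rewrite ltn_add2l.
  by rewrite -mulnSr leq_mul2l hl' orbT.
apply: pauli_ext => j.
  rewrite (extE2 _ (hlt j)) /a'' /=; case: (key j) => -> ->; by rewrite extE.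
rewrite (extE2 _ (hlt j)) /b'' /=; case: (key j) => -> ->; by rewrite extE.
Qed.

End Pauli.

End PartC.
Import PartC.

Module PartD.
Import GRing.Theory Num.Theory.
Local Open Scope ring_scope.
Local Open Scope complex_scope.
Set Implicit Arguments. Unset Strict Implicit. Unset Printing Implicit Defensive.

Section Omega.
Variable R : realType.
Local Notation C := (R[i]).
Variable d : nat.
Hypothesis d1 : (1 < d)%N.

Let th : R := 2 * pi / d%:R.

Lemma omegaX k : omega R d ^+ k = Complex (cos (k%:R * th)) (sin (k%:R * th)).
Proof.
elim: k => [|k IH]; first by rewrite expr0 mul0r cos0 sin0.
rewrite exprSr IH /omega -/th.
apply/eqP; rewrite eq_complex /=.
rewrite -[k.+1]addn1 natrD mulrDl mul1r cosD sinD.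
by rewrite eqxx addrC eqxx.
Qed.

Lemma d_neq0 : (d%:R : R) != 0.
Proof. by rewrite pnatr_eq0 -lt0n ltnW. Qed.

Lemma omega_d : omega R d ^+ d = 1.
Proof.
rewrite omegaX /th mulrC divfK ?d_neq0 // -mulr_natl mulr_natl.
by rewrite mulr_natl cos2pi sin2pi.
Qed.

Lemma omega_neq1 k : (0 < k < d)%N -> omega R d ^+ k != 1.
Proof.
move=> /andP [k0 kd]; rewrite omegaX; apply/eqP => -[hc _].
set x := k%:R * pi / d%:R : R.
have hx : k%:R * th = x *+ 2.
  rewrite /x /th mulr2n; ring.
have pi0 : 0 < pi :> R by exact: pi_gt0.
have dpos : 0 < d%:R :> R by rewrite ltr0n ltnW.
have xpos : 0 < x < pi.
  apply/andP; split; first by rewrite /x divr_gt0 // mulr_gt0 // ltr0n.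
  rewrite /x ltr_pdivrMr // mulrC ltr_pM2l // ltr_nat; exact: kd.
have := sin_gt0_pi xpos; rewrite lt0r => /andP [/eqP []].
move: hc; rewrite hx cos_mulr2n => h.
have h2 : cos x ^+ 2 = 1 by move: h; rewrite mulr2n; lra.
have : sin x ^+ 2 = 0 by rewrite sin2cos2 h2 subrr.
by move/eqP; rewrite sqrf_eq0 => /eqP.
Qed.

Lemma omega_conj : omega R d * (omega R d)^* = 1.
Proof.
rewrite /omega; apply/eqP; rewrite eq_complex /=.
by rewrite mulrN opprK -!expr2 cos2Dsin2 eqxx /= mulrN mulrC addNr eqxx.
Qed.


Lemma geom_sum0 (u : C) : u ^+ d = 1 -> u != 1 -> \sum_(c < d) u ^+ c = 0.
Proof.
move=> hd hu; have := subrX1 u d; rewrite hd subrr => /esym /eqP.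
by rewrite mulf_eq0 subr_eq0 (negbTE hu) /= => /eqP.
Qed.

Lemma charsum a b : (a < d)%N -> (b < d)%N ->
  \sum_(c < d) omega R d ^+ (c * a) * (omega R d ^+ (c * b))^* =
  (a == b)%:R * d%:R.
Proof.
move=> ha hb; set w := omega R d.
pose u := w ^+ a * w^* ^+ b.
have hc : forall c : nat, w ^+ (c * a) * (w ^+ (c * b))^* = u ^+ c.
  by move=> c; rewrite rmorphXn /= (mulnC c a) (mulnC c b) !exprM exprMn.
under eq_bigr => c _ do rewrite hc.
have hwc : forall k, w ^+ k * w^* ^+ k = 1.
  by move=> k; rewrite -exprMn omega_conj expr1n.
case: (eqVneq a b) => [hab|hab].
  rewrite /u -hab hwc; under eq_bigr => c _ do rewrite expr1n.
  by rewrite sumr_const card_ord mul1r.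
rewrite mul0r; apply: geom_sum0.
  rewrite /u exprMn -!exprM !(mulnC _ d) !exprM omega_d expr1n.
  by rewrite -rmorphXn omega_d rmorph1 expr1n mulr1.
case: (ltngtP a b) => hab'; last by rewrite hab' eqxx in hab.
  have -> : u = (w ^+ (b - a))^*.
    move: (subnK (ltnW hab')); set k := (b - a)%N => hk.
    by rewrite /u -hk exprD mulrCA hwc mulr1 rmorphXn.
  apply/eqP => h; have := congr1 Num.conj h; rewrite conjCK rmorph1; apply/eqP.
  by apply: omega_neq1; rewrite subn_gt0 hab' /= (leq_ltn_trans (leq_subr _ _) hb).
have -> : u = w ^+ (a - b).
  move: (subnK (ltnW hab')); set k := (a - b)%N => hk.
  by rewrite /u -hk exprD -mulrA hwc mulr1.
by apply: omega_neq1; rewrite subn_gt0 hab' /= (leq_ltn_trans (leq_subr _ _) ha).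
Qed.

End Omega.

End PartD.
Import PartD.

Module PartE.
Import GRing.Theory Num.Theory.
Local Open Scope ring_scope.
Local Open Scope complex_scope.
Set Implicit Arguments. Unset Strict Implicit. Unset Printing Implicit Defensive.

Section Dephase.
Variable R : realType.
Local Notation C := (R[i]).
Variable d : nat.
Hypothesis d1 : (1 < d)%N.
Variable m : nat.

Lemma d0 : (0 < d)%N. Proof. exact: ltnW. Qed.

Lemma digit_lt x k : (digit d x k < d)%N.
Proof. by rewrite /digit ltn_pmod // d0. Qed.

Lemma digit_diff (x y : 'I_(d ^ m)) : x != y -> exists k : 'I_m, digit d x k != digit d y k.
Proof.
move=> hxy; apply/existsP; apply: contraT; rewrite negb_exists => /forallP hn.
case/eqP: hxy; apply/val_inj => /=.
have := @digits_inj d m x y d0.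
rewrite !modn_small //; apply => l hl.
by have := hn (Ordinal hl) => /negPn /eqP.
Qed.

Definition Zop (beta : {ffun 'I_m -> 'I_d}) : 'M[C]_(d ^ m) :=
  pauli_string R d (fun _ => 0%N) (fun k => nat_of_ord (beta k)).

Definition zf (beta : {ffun 'I_m -> 'I_d}) (x : nat) : C :=
  \prod_(k < m) omega R d ^+ (beta k * digit d x k).

Lemma Zop_diag beta (x y : 'I_(d ^ m)) : Zop beta x y = (x == y)%:R * zf beta x.
Proof.
rewrite mxE; case: (eqVneq x y) => [<-|hxy].
  rewrite mul1r; apply: eq_bigr => k _.
  by rewrite addn0 modn_small ?digit_lt // eqxx mul1r.
case: (digit_diff hxy) => k hk.
rewrite mul0r (bigD1 k) //= addn0 modn_small ?digit_lt // (negbTE hk) !mul0r //.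
Qed.

Lemma mul_diagl n (f : 'I_n -> C) (M : 'M[C]_n) x v :
  ((\matrix_(i, j) ((i == j)%:R * f i)) *m M) x v = f x * M x v.
Proof.
rewrite mxE (bigD1 x) //= big1 ?addr0; first by rewrite mxE eqxx mul1r.
by move=> u hu; rewrite mxE eq_sym (negbTE hu) mul0r mul0r.
Qed.

Lemma mul_diagr n (f : 'I_n -> C) (M : 'M[C]_n) x y :
  (M *m adjm (\matrix_(i, j) ((i == j)%:R * f i))) x y = M x y * (f y)^*.
Proof.
rewrite mxE (bigD1 y) //= big1 ?addr0; first by rewrite !mxE eqxx mul1r.
move=> u hu; rewrite !mxE eq_sym (negbTE hu) mul0r rmorph0 mulr0 //.
Qed.

Lemma Zop_mx beta : Zop beta = \matrix_(i, j) ((i == j)%:R * zf beta i).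
Proof. by apply/matrixP => x y; rewrite Zop_diag mxE. Qed.

Lemma dephase (M : 'M[C]_(d ^ m)) :
  \sum_(beta : {ffun 'I_m -> 'I_d}) (Zop beta *m M *m adjm (Zop beta)) =
  (d ^ m)%:R *: \matrix_(x, y) ((x == y)%:R * M x x).
Proof.
apply/matrixP => x y; rewrite summxE !mxE.
under eq_bigr => beta _ do rewrite Zop_mx mul_diagr mul_diagl.
have hs : \sum_(beta : {ffun 'I_m -> 'I_d}) zf beta x * M x y * (zf beta y)^* =
          M x y * \prod_(k < m) ((digit d x k == digit d y k)%:R * d%:R).
  rewrite (eq_bigr (fun beta : {ffun 'I_m -> 'I_d} =>
     M x y * \prod_(k < m) (omega R d ^+ (beta k * digit d x k) *
                            (omega R d ^+ (beta k * digit d y k))^*))); last first.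
    move=> beta _; rewrite /zf rmorph_prod big_split /=; ring.
  rewrite -mulr_sumr; congr (_ * _); rewrite -(bigA_distr_bigA (fun (k : 'I_m) (c : 'I_d) =>
      omega R d ^+ (c * digit d x k) * (omega R d ^+ (c * digit d y k))^*)) /=.
  by apply: eq_bigr => k _; rewrite charsum ?digit_lt.
rewrite hs; case: (eqVneq x y) => [<-|hxy].
  rewrite mul1r; under eq_bigr => k _ do rewrite eqxx mul1r.
  by rewrite prodr_const card_ord natrX mulrC.
case: (digit_diff hxy) => k hk.
by rewrite (bigD1 k) //= (negbTE hk) !mul0r mulr0 mulr0.
Qed.

End Dephase.

End PartE.
Import PartE.

Module PartF.
Import GRing.Theory Num.Theory.
Local Open Scope ring_scope.
Local Open Scope complex_scope.
Set Implicit Arguments. Unset Strict Implicit. Unset Printing Implicit Defensive.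

Section Gen.
Variable R : realType.
Local Notation C := (R[i]).

Lemma adjm_proj N (v : 'cV[C]_N) : adjm (proj v) = proj v.
Proof. by rewrite /proj adjmM adjmK. Qed.

Lemma quad_proj N (x v : 'cV[C]_N) :
  (adjm x *m proj v *m x) 0 0 = (adjm x *m v) 0 0 * ((adjm x *m v) 0 0)^*.
Proof.
rewrite /proj mulmxA -mulmxA [in LHS]mxE big_ord1.
congr (_ * _); rewrite -[adjm v *m x]adjmK adjmM adjmK !mxE.
reflexivity.
Qed.

Lemma quad_sum N I (r : seq I) (P : pred I) (F : I -> 'M[C]_N) (x : 'cV[C]_N) :
  (adjm x *m (\sum_(i <- r | P i) F i) *m x) 0 0 =
  \sum_(i <- r | P i) (adjm x *m F i *m x) 0 0.
Proof.
rewrite mulmx_sumr mulmx_suml summxE; by [].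
Qed.

Lemma quad_scale N (c : C) (A : 'M[C]_N) (x : 'cV[C]_N) :
  (adjm x *m (c *: A) *m x) 0 0 = c * (adjm x *m A *m x) 0 0.
Proof. by rewrite -scalemxAr -scalemxAl mxE. Qed.

Lemma psd_comb N I (r : seq I) (P : pred I) (c : I -> C) (v : I -> 'cV[C]_N) :
  (forall i, 0 <= c i) -> psd (\sum_(i <- r | P i) c i *: proj (v i)).
Proof.
move=> hc; split.
  rewrite adjm_sum; apply: eq_bigr => i _.
  by rewrite adjmZ adjm_proj geC0_conj.
move=> x; rewrite quad_sum; apply: sumr_ge0 => i _.
by rewrite quad_scale quad_proj mulr_ge0 // mul_conjC_ge0.
Qed.

Lemma cone_psd d m (s : 'M[C]_(d ^ m)) : @cone R d m s -> psd s.
Proof.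
move=> [k [w [p [hw [_ ->]]]]]; apply: psd_comb => l.
by rewrite realCE lecR.
Qed.

Lemma tr_projM N (v : 'cV[C]_N) (X : 'M[C]_N) :
  \tr (proj v *m X) = (adjm v *m X *m v) 0 0.
Proof. by rewrite /proj -mulmxA mxtrace_mulC trace_mx11. Qed.

Lemma proj_idem N (v : 'cV[C]_N) : adjm v *m v = 1%:M -> proj v *m proj v = proj v.
Proof.
move=> h; rewrite /proj mulmxA -(mulmxA v) h mulmx1 //.
Qed.

Lemma supp_proj_self N (v : 'cV[C]_N) : adjm v *m v = 1%:M -> supp_proj (proj v) (proj v).
Proof.
move=> h; split; first by rewrite adjm_proj.
by split; [|split]; rewrite ?proj_idem.
Qed.

Lemma supp_proj_eq N (v : 'cV[C]_N) P : adjm v *m v = 1%:M ->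
  supp_proj (proj v) P -> P = proj v.
Proof.
move=> hv [hP [hPP [hPr hrk]]].
have hrP : proj v *m P = proj v.
  by rewrite -[in LHS]adjm_proj hP -adjmM hPr adjm_proj.
have s1 : (proj v <= P)%MS by rewrite -hrP submxMl.
have s2 : (P <= proj v)%MS.
  have := mxrank_leqif_eq s1; rewrite hrk => -[_].
  by rewrite eqxx => /esym /andP [].
case/submxP: s2 => D hD.
have hPv : P *m v = v.
  by rewrite -[RHS](mulmx1 v) -hv mulmxA -/(proj v) -hPr -mulmxA /proj -mulmxA hv mulmx1.
have : D *m v = v by rewrite -[RHS]hPv hD /proj !mulmxA -(mulmxA _ _ v) hv mulmx1.
by rewrite hD /proj mulmxA => ->.
Qed.

End Gen.

End PartF.
Import PartF.

Module PartG.
Import Order.TTheory GRing.Theory Num.Theory.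
Local Open Scope ring_scope.
Local Open Scope complex_scope.
Set Implicit Arguments. Unset Strict Implicit. Unset Printing Implicit Defensive.

Section Main.
Variable R : realType.
Local Notation C := (R[i]).
Variables (d t n : nat) (V C0 : 'M[C]_(d ^ t)).
Hypotheses (d1 : (1 < d)%N) (t0 : (0 < t)%N).
Hypotheses (hV : third_level R d t V) (hC0 : is_clifford R d t C0).

Let dd0 : (0 < d)%N := ltnW d1.
Let U := V *m C0.
Let UU := @Kron R d t n (fun _ => U).

Lemma hU : unitary U.
Proof. exact: unitaryM hV.1 hC0.1. Qed.

Lemma hUU : unitary UU.
Proof. by apply: (Kron_unitary dd0) => l; exact: hU. Qed.

Lemma ext0 m k : ext (fun _ : 'I_m => 0%N) k = 0%N.
Proof. by rewrite /ext; case: insub. Qed.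

Lemma W_clifford (beta : {ffun 'I_(t * n) -> 'I_d}) :
  is_clifford R d (t * n) (UU *m Zop R beta *m adjm UU).
Proof.
rewrite /Zop (pauli_tn R dd0) (Kron_adj dd0) !(Kron_mul dd0).
apply: (Kron_clifford dd0) => // l.
set P := pauli_string R d _ _.
have -> : U *m P *m adjm U = V *m (C0 *m P *m adjm C0) *m adjm V.
  by rewrite /U adjmM !mulmxA.
apply: hV.2; apply: hC0.2.
by exists 1, (fun j : 'I_t => ext (fun _ : 'I_(t * n) => 0%N) (l * t + j)), 
  (fun j : 'I_t => ext (fun k : 'I_(t * n) => nat_of_ord (beta k)) (l * t + j));
  rewrite normr1 scale1r.
Qed.

Local Notation D := (d ^ (t * n))%N.

Definition Mx (sig : 'M[C]_D) := adjm UU *m sig *m UU.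

Definition ex (x : 'I_D) : 'cV[C]_D := delta_mx x 0.

Lemma adjm_delta m p (i : 'I_m) (j : 'I_p) : adjm (delta_mx i j : 'M[C]_(m, p)) = delta_mx j i.
Proof.
apply/matrixP => a b; rewrite !mxE.
by rewrite andbC; case: (_ && _); rewrite ?rmorph0 ?rmorph1.
Qed.

Lemma diag_sum (M : 'M[C]_D) :
  \matrix_(x, y) ((x == y)%:R * M x x) = \sum_x M x x *: (ex x *m adjm (ex x)).
Proof.
apply/matrixP => x y; rewrite !mxE summxE (bigD1 x) //= big1 ?addr0.
  by rewrite /ex adjm_delta mul_delta_mx !mxE eqxx andTb eq_sym mulrC.
by move=> z hz; rewrite /ex adjm_delta mul_delta_mx !mxE eq_sym (negbTE hz) mulr0.
Qed.

Lemma twirl_eq (sig : 'M[C]_D) :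
  \sum_(beta : {ffun 'I_(t * n) -> 'I_d})
     realC (D%:R^-1) *: ((UU *m Zop R beta *m adjm UU) *m sig *m adjm (UU *m Zop R beta *m adjm UU))
  = \sum_x Mx sig x x *: proj (UU *m ex x).
Proof.
have h1 : forall beta : {ffun 'I_(t * n) -> 'I_d},
    (UU *m Zop R beta *m adjm UU) *m sig *m adjm (UU *m Zop R beta *m adjm UU) =
    UU *m (Zop R beta *m Mx sig *m adjm (Zop R beta)) *m adjm UU.
  move=> beta; rewrite !adjmM adjmK /Mx !mulmxA //.
under eq_bigr => beta _ do rewrite h1.
rewrite -scaler_sumr -mulmx_suml -mulmx_sumr (dephase d1) -scalemxAr -scalemxAl scalerA.
have -> : realC (D%:R^-1) * D%:R = 1 :> C.
  rewrite realCE fmorphV /= rmorph_nat mulVf // pnatr_eq0 -lt0n expn_gt0 dd0 //.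
rewrite scale1r diag_sum mulmx_sumr mulmx_suml; apply: eq_bigr => x _.
by rewrite -scalemxAr -scalemxAl /proj adjmM !mulmxA.
Qed.


Lemma D_gt0 : (0 < D)%N. Proof. by rewrite expn_gt0 dd0. Qed.

Definition x0 : 'I_D := Ordinal D_gt0.

Lemma ket0_ex : ket0 R d (t * n) = ex x0.
Proof.
apply/matrixP => i j; rewrite !ord1 !mxE /= andbT.
by congr (_%:R); apply/eqP/eqP => [h|->//]; apply/val_inj.
Qed.

Lemma ex_norm x : adjm (ex x) *m ex x = 1%:M.
Proof.
rewrite /ex adjm_delta mul_delta_mx; apply/matrixP => i j.
by rewrite !ord1 !mxE.
Qed.

Lemma Mx_entry sig x : Mx sig x x = (adjm (UU *m ex x) *m sig *m (UU *m ex x)) 0 0.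
Proof.
rewrite adjmM /ex adjm_delta.
have -> : (delta_mx 0 x : 'M[C]_(1, D)) *m adjm UU *m sig *m (UU *m delta_mx x 0) =
          (delta_mx 0 x : 'M[C]_(1, D)) *m Mx sig *m (delta_mx x 0 : 'M[C]_(D, 1)).
  by rewrite /Mx !mulmxA.
by rewrite -rowE -colE !mxE.
Qed.

Lemma Mx_ge0 sig x : @cone R d (t * n) sig -> 0 <= Mx sig x x.
Proof. by move=> /cone_psd [_ h]; rewrite Mx_entry. Qed.

Lemma sum_Mx sig : \sum_x Mx sig x x = \tr sig.
Proof.
rewrite -[LHS]/(\tr (Mx sig)) /Mx mxtrace_mulC (mulmxA UU).
by rewrite hUU mul1mx.
Qed.

Definition Tw sig := \sum_x Mx sig x x *: proj (UU *m ex x).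

Lemma tr_Tw sig : \tr (Tw sig) = \tr sig.
Proof.
rewrite /Tw raddf_sum /= -sum_Mx; apply: eq_bigr => x _.
rewrite mxtraceZ tr_proj1 ?mulr1 //; apply: unit_vec; [exact: hUU | exact: ex_norm].
Qed.

Lemma FSTAB_tr m (s : 'M[C]_(d ^ m)) : in_FSTAB R d m s -> \tr s = 1.
Proof.
move=> [k [w [p [hw [hsum [hp ->]]]]]]; rewrite raddf_sum /=.
rewrite (eq_bigr (fun i => realC (w i))); last first.
  move=> i _; rewrite mxtraceZ tr_proj1 ?mulr1 //; exact: stab_norm.
by rewrite realC_sum hsum.
Qed.

Lemma Tw_FSTAB sig : in_FSTAB R d (t * n) sig -> in_FSTAB R d (t * n) (Tw sig).
Proof.
move=> hs; have hc := FSTAB_cone hs.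
apply: (cone_FSTAB dd0); last by rewrite tr_Tw (FSTAB_tr hs).
rewrite /Tw -twirl_eq; apply: cone_sum => beta; apply: coneZ.
  by rewrite invr_ge0 ler0n.
by apply: cone_conj => //; exact: W_clifford.
Qed.


Lemma rC_M (a b : R) : realC (a * b) = realC a * realC b.
Proof. by rewrite !realCE rmorphM. Qed.
Lemma rC_V (a : R) : realC (a^-1) = (realC a)^-1.
Proof. by rewrite !realCE fmorphV. Qed.
Lemma rC_D (a b : R) : realC (a + b) = realC a + realC b.
Proof. by rewrite !realCE rmorphD. Qed.
Lemma rC_B (a b : R) : realC (a - b) = realC a - realC b.
Proof. by rewrite !realCE rmorphB. Qed.
Lemma rC1 : realC 1 = 1 :> C.
Proof. by rewrite realCE rmorph1. Qed.
Lemma rC0 : realC 0 = 0 :> C.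
Proof. by rewrite realCE rmorph0. Qed.
Lemma ReC (a : R) : complex.Re (realC a) = a.
Proof. by []. Qed.
Lemma ge0_realC (z : C) : 0 <= z -> z = realC (complex.Re z).
Proof.
move=> hz; rewrite realCE; apply/eqP; rewrite eq_complex /= eqxx /=.
by rewrite (ger0_Im hz).
Qed.
Lemma ge0_Re (z : C) : 0 <= z -> 0 <= complex.Re z.
Proof. by rewrite lecE => /andP [_]. Qed.

Let Psi := UU *m ket0 R d (t * n).

Lemma hPsiN : adjm Psi *m Psi = 1%:M.
Proof. apply: unit_vec; [exact: hUU | exact: ket0_norm]. Qed.

Lemma ln2_gt0 : 0 < ln (2 : R).
Proof. by apply: ln_gt0; rewrite ltr1n. Qed.

Lemma dmin_le_dmax : (Dmin_STAB R d (t * n) (proj Psi) <= Dmax_STAB R d (t * n) (proj Psi))%E.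
Proof.
apply: le_ereal_inf_tmp => y [s [tau [hs [htau [hF ->]]]]].
set sig := _ *: _ in hF.
apply: ge_ereal_inf; exists (neglog2 (\tr (proj Psi *m sig))).
  by exists (proj Psi), sig; split; [exact: supp_proj_self hPsiN | split].
case: htau => [[_ hpsd] _].
set h := (adjm Psi *m tau *m Psi) 0 0.
have h0 : 0 <= h := hpsd Psi.
have hr0 := ge0_Re h0.
have htr : \tr (proj Psi *m sig) = realC ((1 + s)^-1 * (1 + s * complex.Re h)).
  rewrite tr_projM /sig quad_scale mulmxDr mulmxDl mxE quad_scale -/h quad_proj.
  rewrite hPsiN mxE /= conjC1 mulr1 {1}(ge0_realC h0).
  by rewrite rC_M rC_V !rC_D rC_M rC1.
have s1 : 0 < 1 + s by rewrite ltr_pwDl.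
have q0 : 0 < (1 + s)^-1 * (1 + s * complex.Re h).
  apply: mulr_gt0; first by rewrite invr_gt0.
  by have := mulr_ge0 hs hr0; lra.
rewrite htr /neglog2 ReC q0 lee_fin -mulNr ler_pM2r ?invr_gt0 ?ln2_gt0 //.
rewrite lerNl -lnV ?posrE // ler_ln ?posrE ?invr_gt0 //.
rewrite -{1}(mulr1 ((1 + s)^-1)) ler_wpM2l ?invr_ge0 ?(ltrW s1) //.
  lra.
by have := mulr_ge0 hs hr0; lra.
Qed.


Lemma Psi_ex : Psi = UU *m ex x0.
Proof. by rewrite /Psi ket0_ex. Qed.

Lemma dmax_le_dmin : (Dmax_STAB R d (t * n) (proj Psi) <= Dmin_STAB R d (t * n) (proj Psi))%E.
Proof.
apply: le_ereal_inf_tmp => y [P [sig [hP [hsig ->]]]].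
rewrite (supp_proj_eq hPsiN hP).
set g := \tr (proj Psi *m sig).
have hg : g = Mx sig x0 x0 by rewrite /g tr_projM Mx_entry -Psi_ex.
rewrite /neglog2; case: ifPn => hpos; last by rewrite leey.
set fr := complex.Re g.
have hc := FSTAB_cone hsig.
have hM0 : forall x, 0 <= Mx sig x x by move=> x; exact: Mx_ge0.
have hgr : g = realC fr by rewrite /fr; apply: ge0_realC; rewrite hg.
have hsum : \sum_x Mx sig x x = 1 by rewrite sum_Mx (FSTAB_tr hsig).
have hrest : \sum_(x | x != x0) Mx sig x x = 1 - g.
  by move: hsum; rewrite (bigD1 x0) //= -hg => <-; rewrite addrC addrK.
have fr1 : fr <= 1.
  have : 0 <= \sum_(x | x != x0) Mx sig x x by apply: sumr_ge0 => x _.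
  by rewrite hrest hgr -rC1 -rC_B realCE lecR subr_ge0.
set s := fr^-1 - 1.
have hs : 0 <= s by rewrite subr_ge0 invf_ge1.
have h1s : 1 + s = fr^-1 by rewrite /s addrC subrK.
have hTw : Tw sig = g *: proj (UU *m ex x0) + \sum_(x | x != x0) Mx sig x x *: proj (UU *m ex x).
  by rewrite /Tw (bigD1 x0) // -hg.
apply: ge_ereal_inf; exists ((ln (1 + s) / ln 2)%:E); last first.
  by rewrite lee_fin h1s lnV ?posrE // mulNr.
pose tau := if fr < 1 then
    \sum_(x | x != x0) (realC ((1 - fr)^-1) * Mx sig x x) *: proj (UU *m ex x)
  else proj Psi.
exists s, tau; split => //; split; last split => //.
  rewrite /tau; case: ifPn => hfr.
    split.
      apply: psd_comb => x; apply: mulr_ge0 => //.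
      by rewrite realCE lecR invr_ge0 subr_ge0.
    rewrite raddf_sum /= (eq_bigr (fun x => realC ((1 - fr)^-1) * Mx sig x x)); last first.
      move=> x _; rewrite mxtraceZ tr_proj1 ?mulr1 //.
      apply: unit_vec; [exact: hUU | exact: ex_norm].
    rewrite -mulr_sumr hrest hgr -rC1 -rC_B -rC_M mulVf ?rC1 //.
    by apply/eqP => h; move: hfr; lra.
  split; last exact: tr_proj1 hPsiN.
  have -> : proj Psi = \sum_(i <- [:: tt]) 1 *: proj Psi by rewrite big_seq1 scale1r.
  by apply: psd_comb.
have -> : (realC (1 + s))^-1 *: (proj Psi + realC s *: tau) = Tw sig.
  rewrite hTw h1s rC_V invrK hgr scalerDr {1}Psi_ex; congr (_ + _).
  rewrite /tau; case: ifPn => hfr.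
    rewrite scalerA scaler_sumr; apply: eq_bigr => x _.
    rewrite scalerA; congr (_ *: _); rewrite mulrA -!rC_M.
    have -> : fr * s * (1 - fr)^-1 = 1.
      have fr0 : fr != 0 by apply/eqP => h; move: hpos; rewrite -/fr h; lra.
      have fr1' : 1 - fr != 0 by apply/eqP => h; move: hfr; lra.
      by rewrite /s mulrBr mulfV // mulr1 mulfV.
    by rewrite rC1 mul1r.
  have fr_1 : fr = 1 by apply/eqP; rewrite eq_le fr1 /= leNgt.
  have -> : s = 0 by rewrite /s fr_1 invr1 subrr.
  rewrite rC0 scale0r scaler0 big1 // => x hx.
  have : 1 - g = 0 by rewrite hgr fr_1 rC1 subrr.
  rewrite -hrest => /(psumr_eq0P (fun x _ => hM0 x)) -> //.
  by rewrite scale0r.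
exact: Tw_FSTAB.
Qed.


Lemma main_eq : Dmin_STAB R d (t * n) (proj Psi) = Dmax_STAB R d (t * n) (proj Psi).
Proof.
by apply/eqP; rewrite eq_le dmin_le_dmax dmax_le_dmin.
Qed.

End Main.
End PartG.
Import PartG.

Lemma vget_mget (R : realType) (d t : nat) (U : 'M[R[i]]_(d ^ t)) k : (0 < d)%N ->
  vget (U *m ket0 R d t) k = mget U k 0.
Proof.
move=> d0; rewrite /vget /mget.
case: insubP => [u Pu hu|]; last by [].
have hz : (0 < d ^ t)%N by rewrite expn_gt0 d0.
rewrite (insubT (fun x => x < d ^ t)%N hz) mxE (bigD1 (Ordinal hz)) //= big1 ?addr0.
  by rewrite !mxE /= mulr1.
move=> y hy; rewrite !mxE; have -> : (nat_of_ord y == 0%N) = false.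
  by apply/negbTE; apply: contra hy => /eqP h; apply/eqP/val_inj.
by rewrite mulr0.
Qed.

Theorem proposition5 (R : realType) (d t : nat) :
  ((d == 2)%N || (prime d && odd d)) -> (1 <= t)%N ->
  forall (V : 'M[R[i]]_(d ^ t)) (phi : 'cV[R[i]]_(d ^ t)),
    third_level R d t V -> is_stab_state R d t phi ->
    forall n : nat, (1 <= n)%N ->
      Dmin_STAB R d (t * n) (proj (tpow_vec R d t n (V *m phi))) =
      Dmax_STAB R d (t * n) (proj (tpow_vec R d t n (V *m phi))).
Proof.
move=> hd t1 V phi hV [C0 [hC0 ->]] n _.
have d1 : (1 < d)%N.
  by case/orP: hd => [/eqP -> //|/andP [pd _]]; exact: prime_gt1.
have d0 : (0 < d)%N := ltnW d1.
have -> : tpow_vec R d t n (V *m (C0 *m ket0 R d t)) =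
          Kron n (fun _ => V *m C0) *m ket0 R d (t * n).
  apply/matrixP => x j; rewrite ord1 (Kron_ket0 d0) mxE; apply: eq_bigr => l _.
  by rewrite mulmxA vget_mget.
exact: main_eq.
Qed.
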